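(* Let $n\geq 1$ and $s\geq 1$ be integers. Let $G$ be a connected graph on $n+s$ vertices and let $S\subseteq V(G)$ with $|S|=s$. If every non-terminal level with respect to $S$ contains at least $3$ vertices, then \[ \sigma(S)\leq \frac{1}{6}\left(n^2+3n+2\right). \]
   Context: For a connected graph $G$ and $\emptyset\neq S\subseteq V(G)$, $d_G(S,u)=\min\{d_G(u,v): v\in S\}$, and the status of $S$ is $\sigma(S)=\sigma_G(S)=\sum_{u\in V(G)} d_G(S,u)$. For $i\geq 1$, the $i$-th level with respect to $S$ is the set of vertices $u$ with $d_G(S,u)=i$. The terminal level is the nonempty level with the largest index $i$; the non-terminal levels are all levels $1,\dots,r$ preceding the terminal level $r+1$ (all of which are nonempty by connectivity). *)

(* Defs.v *)
From mathcomp Require Import all_boot.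
Set Implicit Arguments. Unset Strict Implicit. Unset Printing Implicit Defensive.

(* A simple graph: vertex set a finType T, edge relation e : rel T
   (assumed symmetric and irreflexive in the theorem). *)

Fixpoint walkn (T : finType) (e : rel T) (k : nat) (u v : T) : bool :=
  if k is k'.+1 then [exists w, e u w && walkn e k' w v] else u == v.

Definition connected_graph (T : finType) (e : rel T) : Prop :=
  forall u v : T, exists k, walkn e k u v.

(* Search over 0..#|T|-1 (shortest walks in a
   connected graph have length < #|T|); returns #|T| if none found. *)
Definition distS (T : finType) (e : rel T) (S : {set T}) (u : T) : nat :=
  find (fun k => [exists v in S, walkn e k v u]) (iota 0 #|T|).

Definition status (T : finType) (e : rel T) (S : {set T}) : nat :=
  \sum_(u : T) distS e S u.

Definition level (T : finType) (e : rel T) (S : {set T}) (i : nat) : {set T} :=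
  [set u | distS e S u == i].

(* index of the terminal level (largest i with nonempty level) *)
Definition ecc (T : finType) (e : rel T) (S : {set T}) : nat :=
  \max_(u : T) distS e S u.

(* Main.v *)
Require Import Defs.
From mathcomp Require Import all_boot.
From mathcomp Require Import zify.

Lemma seqbound (E : nat) (c : nat -> nat) :
  (forall i, i.+1 < E -> 3 <= c i) ->
  6 * (\sum_(0 <= i < E) i.+1 * c i) <=
  (\sum_(0 <= i < E) c i + 1) * (\sum_(0 <= i < E) c i + 2).
Proof.
elim: E c => [|E IH] c H; first by rewrite !big_geq.
rewrite !big_nat_recl //.
under eq_bigr => i _ do rewrite mulSn.
rewrite big_split /=.
have IH' := IH (fun i => c i.+1) (fun i Hi => H i.+1 Hi).
case: E IH H IH' => [|E] IH H IH'.
  rewrite !big_geq //. move: (c 0) => x; clear IH IH' H; case: x => [|[|x]]; nia.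
move: IH'.
set A := \sum_(0 <= i < _) c i.+1.
set B := \sum_(0 <= i < _) i.+1 * c i.+1.
have := H 0 isT; move: (c 0) A B => x A B /subnK <-.
move: (x - 3) => k; nia.
Qed.

Lemma sum_by_level (T : finType) (e : rel T) (S : {set T}) (F : nat -> nat) :
  \sum_(u : T) F (distS e S u) =
  \sum_(0 <= i < (ecc e S).+1) F i * #|level e S i|.
Proof.
have dle : forall u, distS e S u < (ecc e S).+1.
  by move=> u; rewrite ltnS /ecc (leq_bigmax (F := fun u => distS e S u) u).
transitivity (\sum_(u : T) \sum_(0 <= i < (ecc e S).+1)
                 (distS e S u == i) * F i).
  apply: eq_bigr => u _.
  rewrite (bigD1_seq (distS e S u)) /= ?mem_iota ?iota_uniq ?dle //.
  rewrite eqxx mul1n big1 ?addn0 // => i /negbTE.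
  by rewrite eq_sym => ->.
have Hi : forall i, F i * #|level e S i| = \sum_(u : T) (distS e S u == i) * F i.
  move=> i.
rewrite -sum1_card big_distrr /= big_mkcond /=.
apply: eq_bigr => u _; rewrite inE.
by case: (distS e S u == i); rewrite ?muln1 ?muln0 ?mul1n ?mul0n.
rewrite (eq_bigr _ (fun i _ => Hi i)).
exact: exchange_big.
Qed.

Lemma level0 (T : finType) (e : rel T) (S : {set T}) :
  0 < #|T| -> level e S 0 = S.
Proof.
move=> HT; apply/setP => u; rewrite inE /distS.
case: #|T| HT => [|k] // _ /=.
case: (boolP [exists v in S, v == u]) => [H | Hn] /=.
  by case/existsP: H => v /andP [vS /eqP <-]; rewrite vS.
apply/esym/negP => uS; move/negP: Hn; apply; apply/existsP; exists u.
by rewrite uS /= eqxx.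
Qed.

Theorem lemma8 (n s : nat) (T : finType) (e : rel T) (S : {set T}) :
  1 <= n -> 1 <= s ->
  symmetric e -> irreflexive e -> connected_graph e ->
  #|T| = n + s -> #|S| = s ->
  (forall i, 1 <= i < ecc e S -> 3 <= #|level e S i|) ->
  6 * status e S <= n ^ 2 + 3 * n + 2.
Proof.
move=> Hn Hs _ _ _ HT HS Hlev.
have Hst : status e S = \sum_(0 <= i < ecc e S) i.+1 * #|level e S i.+1|.
  by rewrite /status (sum_by_level _ e S (fun x => x)) big_nat_recl // mul0n add0n.
have Hc : n = \sum_(0 <= i < ecc e S) #|level e S i.+1|.
  have := sum_by_level _ e S (fun _ => 1).
  rewrite big_nat_recl // (level0 _ e S) ?HS; last by rewrite HT; lia.
  rewrite sum1_card HT.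
  under [in X in _ = _ + X -> _]eq_bigr => i _ do rewrite mul1n.
  rewrite mul1n; lia.
have := seqbound (ecc e S) (fun i => #|level e S i.+1|) (fun i Hi => Hlev i.+1 Hi).
rewrite -Hst -Hc; nia.
Qed.
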